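(* Let $k,l$ be positive integers with $l<k+2$. Let $Y^l_k$ be the toric variety given as the GIT quotient of $\mathbb{A}^5$, with coordinates $y_1,y_2,x_1,x_2,x_3$, by $\mathbb{G}_m^2$ acting with weights $y_1:(1,0)$, $y_2:(0,1)$, $x_1:(0,1)$, $x_2:(1,l-k)$, $x_3:(0,k)$, with respect to the stability condition $\omega=(1,2)$. Let $X$ be the vanishing locus of a general section of $\mathcal{O}(1,l)$ on $Y^l_k$. Then the projection $\pi\colon Y^l_k\to{\mathbb{P}}(1,1,k)$, $(y_1,y_2,x_1,x_2,x_3)\mapsto(y_2:x_1:x_3)$, maps $X$ onto ${\mathbb{P}}(1,1,k)$ and contracts $l$ disjoint rational curves.
   Context: Work over an algebraically closed field of characteristic zero. $\mathcal{O}(a,b)$ denotes the rank-one sheaf on $Y^l_k$ associated to the character $(a,b)$ of $\mathbb{G}_m^2$; its sections are polynomials in the Cox coordinates of bidegree $(a,b)$. The toric variety attached to a weight matrix and stability condition $\omega$ is $(\mathbb{A}^5\setminus Z_\omega)/\mathbb{G}_m^2$, with $Z_\omega$ the unstable locus. *)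

(* Defs.v *)
From HB Require Import structures.
From mathcomp Require Import all_boot all_order all_algebra.
From mathcomp Require Import mpoly.
Set Implicit Arguments.
Unset Strict Implicit.
Unset Printing Implicit Defensive.
Import Order.TTheory GRing.Theory Num.Theory.
Local Open Scope ring_scope.

(* A weight matrix is a map w : 'I_n -> int * int (the weight of the   *)
(* i-th Cox coordinate); omega : int * int is the stability condition.  *)

Section ToricGIT.
Variable K : fieldType.

(* x is NOT in the unstable locus Z_omega iff omega lies in the (rational)
   cone spanned by the weights of the coordinates that are nonzero at x. *)
Definition semistable n (w : 'I_n -> int * int) (om : int * int)
    (x : 'I_n -> K) : Prop :=
  exists c : 'I_n -> rat,
    [/\ forall i, 0 <= c i,
        forall i, x i = 0 -> c i = 0,
        \sum_i c i * ((w i).1)%:~R = (om.1)%:~R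
      & \sum_i c i * ((w i).2)%:~R = (om.2)%:~R].

Definition torus_act n (w : 'I_n -> int * int) (t1 t2 : K) (x : 'I_n -> K)
  : 'I_n -> K := fun i => t1 ^ (w i).1 * t2 ^ (w i).2 * x i.

Definition same_orbit n (w : 'I_n -> int * int) (x y : 'I_n -> K) : Prop :=
  exists t1 t2 : K, [/\ t1 != 0, t2 != 0 & y = torus_act w t1 t2 x].

(* Weighted projective space P(a_0,...,a_{m-1}) = (A^m \ 0)/G_m. *)
Definition wp_point m (p : 'I_m -> K) : Prop := exists i, p i != 0.
Definition wp_same m (a : 'I_m -> nat) (p q : 'I_m -> K) : Prop :=
  exists lam : K, lam != 0 /\ q = (fun i => lam ^+ a i * p i).

(* sections of O(a,b): polynomials in the Cox coordinates all of whose
   monomials have bidegree (a,b) *)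
Definition is_section n (w : 'I_n -> int * int) (ab : int * int)
    (f : {mpoly K[n]}) : Prop :=
  forall mon, mon \in msupp f ->
    (\sum_i (mon i)%:Z * (w i).1, \sum_i (mon i)%:Z * (w i).2) = ab.

(* "P holds for a general f in the vector space S": P holds on a nonempty
   Zariski-open subset of S, i.e. on a nonempty basic open set
   { f in S | D(coefficients of f) != 0 } for some polynomial D in finitely
   many coefficients of f. *)
Definition holds_generally n (S : {mpoly K[n]} -> Prop)
    (P : {mpoly K[n]} -> Prop) : Prop :=
  exists (N : nat) (ms : 'I_N -> 'X_{1..n}) (D : {mpoly K[N]}),
    (exists f0, S f0 /\ D.@[fun j => f0@_(ms j)] != 0) /\
    (forall f, S f -> D.@[fun j => f@_(ms j)] != 0 -> P f).

Definition homog_of_deg n (d : nat) (p : {mpoly K[n]}) : Prop :=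
  forall mon, mon \in msupp p -> mdeg mon = d.

(* A morphism P^1 -> (A^n \ Z_omega)/G_m^2 given in Cox coordinates:
   phi_i(s,t) homogeneous of degree a*w_i1 + b*w_i2 for fixed integers a,b
   (so that phi(lam s, lam t) = (lam^a,lam^b).phi(s,t)), and phi(s,t) never
   lands in the unstable locus. *)
Definition P1_morphism n (w : 'I_n -> int * int) (om : int * int)
    (phi : 'I_n -> {mpoly K[2]}) : Prop :=
  exists (a b : int) (d : 'I_n -> nat),
    [/\ forall i, homog_of_deg (d i) (phi i),
        forall i, (d i)%:Z = a * (w i).1 + b * (w i).2
      & forall st : 'I_2 -> K, wp_point st ->
          semistable w om (fun i => (phi i).@[st])].

End ToricGIT.

(* The variety Y^l_k. Cox coordinates indexed                          *)
(*   0 = y1, 1 = y2, 2 = x1, 3 = x2, 4 = x3.                            *)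

Definition wY (k l : nat) (i : 'I_5) : int * int :=
  match val i with
  | 0 => ((1 : int), (0 : int))
  | 1 => ((0 : int), (1 : int))
  | 2 => ((0 : int), (1 : int))
  | 3 => ((1 : int), (l%:Z - k%:Z))
  | _ => ((0 : int), (k%:Z))
  end.

Definition omegaY : int * int := ((1 : int), (2 : int)).

Definition wP (k : nat) (j : 'I_3) : nat :=
  match val j with 0 => 1%N | 1 => 1%N | _ => k end.

Definition piY (K : fieldType) (x : 'I_5 -> K) : 'I_3 -> K :=
  fun j => match val j with
           | 0 => x (inord 1)
           | 1 => x (inord 2)
           | _ => x (inord 4)
           end.

Definition inX (K : fieldType) (k l : nat) (f : {mpoly K[5]})
    (x : 'I_5 -> K) : Prop :=
  semistable (wY k l) omegaY x /\ f.@[x] = 0.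

(* Conclusion for a given section f:
   (1) pi maps X onto P(1,1,k);
   (2) pi contracts exactly l disjoint rational curves: there are l pairwise
       distinct points q_1..q_l of P(1,1,k) such that the fibre of X over
       each q_j is a rational curve (image of a nonconstant morphism
       P^1 -> Y^l_k), and over every other point of P(1,1,k) the fibre of X
       is a single point. *)
Definition contraction_property (K : fieldType) (k l : nat)
    (f : {mpoly K[5]}) : Prop :=
  (forall q : 'I_3 -> K, wp_point q ->
     exists x, inX k l f x /\ wp_same (wP k) (piY x) q) /\
  exists (q : 'I_l -> 'I_3 -> K) (phi : 'I_l -> 'I_5 -> {mpoly K[2]}),
    [/\ forall j, wp_point (q j),
        forall j j', wp_same (wP k) (q j) (q j') -> j = j',
        forall j, P1_morphism (wY k l) omegaY (phi j) /\ exists st st' : 'I_2 -> K,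
            [/\ wp_point st, wp_point st' &
                ~ same_orbit (wY k l) (fun i => (phi j i).@[st])
                                      (fun i => (phi j i).@[st'])],
        forall j (x : 'I_5 -> K), semistable (wY k l) omegaY x ->
          ((inX k l f x /\ wp_same (wP k) (piY x) (q j)) <->
           exists st : 'I_2 -> K, wp_point st /\
             same_orbit (wY k l) (fun i => (phi j i).@[st]) x)
      & forall (p : 'I_3 -> K), wp_point p ->
          (forall j, ~ wp_same (wP k) p (q j)) ->
          forall x x', inX k l f x -> inX k l f x' ->
            wp_same (wP k) (piY x) p -> wp_same (wP k) (piY x') p ->
            same_orbit (wY k l) x x'].

(* Main.v *)
Require Import Defs.
From HB Require Import structures.
From mathcomp Require Import all_boot all_order all_algebra all_field.
From mathcomp Require Import mpoly.
From mathcomp Require Import zify ring lra.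
From Stdlib Require Import FunctionalExtensionality.
Set Implicit Arguments. Unset Strict Implicit. Unset Printing Implicit Defensive.
Import Order.TTheory GRing.Theory Num.Theory.
Local Open Scope ring_scope.

Definition v5 {T : Type} (a b c d e : T) : 'I_5 -> T :=
  fun i => match val i with 0 => a | 1 => b | 2 => c | 3 => d | _ => e end.
Definition v3 {T : Type} (a b c : T) : 'I_3 -> T :=
  fun i => match val i with 0 => a | 1 => b | _ => c end.

Lemma v5_comp (T U : Type) (f : T -> U) a b c d e :
  f \o v5 a b c d e = v5 (f a) (f b) (f c) (f d) (f e).
Proof. by apply: functional_extensionality => -[[|[|[|[|i]]]] Hi]. Qed.

Lemma v5_eta (T : Type) (x : 'I_5 -> T) :
  x = v5 (x ord0) (x (inord 1)) (x (inord 2)) (x (inord 3)) (x (inord 4)).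
Proof.
apply: functional_extensionality => -[[|[|[|[|[|i]]]]] Hi] //=;
  rewrite /v5 /=; congr x; apply: val_inj; rewrite /= ?inordK //.
Qed.

Lemma v3_eta (T : Type) (x : 'I_3 -> T) :
  x = v3 (x ord0) (x (inord 1)) (x (inord 2)).
Proof.
apply: functional_extensionality => -[[|[|[|i]]] Hi] //=;
  rewrite /v3 /=; congr x; apply: val_inj; rewrite /= ?inordK //.
Qed.

Lemma E5 (i : 'I_5) (j : nat) : val i = j -> i = inord j.
Proof. move=> Hj; apply: val_inj; rewrite /= inordK -Hj //; exact: ltn_ord. Qed.
Lemma prod5 (R : comRingType) (G : 'I_5 -> R) :
  \prod_(i < 5) G i =
  G ord0 * G (inord 1) * G (inord 2) * G (inord 3) * G (inord 4).
Proof.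
rewrite !big_ord_recl big_ord0 mulr1 !mulrA.
congr (_ * _ * _ * _ * _); congr G; exact: E5.
Qed.
Lemma sum5 (R : nmodType) (G : 'I_5 -> R) :
  \sum_(i < 5) G i =
  G ord0 + G (inord 1) + G (inord 2) + G (inord 3) + G (inord 4).
Proof.
rewrite !big_ord_recl big_ord0 addr0 !addrA.
congr (_ + _ + _ + _ + _); congr G; exact: E5.
Qed.

Definition ev (S : comRingType) N (ms : 'I_N -> 'X_{1..5}) (c : 'I_N -> S)
  (h : 'I_5 -> S) : S := \sum_(j < N) c j * \prod_(i < 5) h i ^+ ms j i.

Lemma ev_morph (S T : comRingType) (phi : {rmorphism S -> T}) N ms
  (c : 'I_N -> S) h : phi (ev ms c h) = ev ms (phi \o c) (phi \o h).
Proof.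
rewrite /ev rmorph_sum; apply: eq_bigr => j _.
by rewrite rmorphM rmorph_prod; congr (_ * _); apply: eq_bigr => i _; rewrite rmorphXn.
Qed.

Lemma ev_morphP (S T : comRingType) (phi : {rmorphism S -> T}) N ms
  (c : 'I_N -> S) (h : 'I_5 -> {poly S}) :
  map_poly phi (ev ms (fun j => (c j)%:P) h) =
  ev ms (fun j => (phi (c j))%:P) (map_poly phi \o h).
Proof.
rewrite (ev_morph (map_poly phi)); congr ev.
by apply: functional_extensionality => j /=; rewrite map_polyC.
Qed.

Definition mySyl (S : nzRingType) (dp dq : nat) (p q : {poly S}) : 'M[S]_(dq + dp) :=
  \matrix_(i, j) match split i with
                 | inl k => p`_(j - k) *+ (k <= j)%N
                 | inr k => q`_(j - k) *+ (k <= j)%N end.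

Lemma resultant_mySyl (S : nzRingType) (p q : {poly S}) :
  resultant p q = \det (mySyl (size p).-1 (size q).-1 p q).
Proof.
rewrite /resultant; congr (\det _); apply/matrixP => i j.
by rewrite Sylvester_mxE mxE.
Qed.

Lemma mySyl_morph (S T : comNzRingType) (phi : {rmorphism S -> T}) dp dq p q :
  phi (\det (mySyl dp dq p q)) = \det (mySyl dp dq (map_poly phi p) (map_poly phi q)).
Proof.
rewrite -det_map_mx; congr (\det _); apply/matrixP => i j.
rewrite !mxE; case: (split i) => k; by rewrite rmorphMn coef_map.
Qed.

Lemma val_inord5 j : (j < 5)%N -> val (inord j : 'I_5) = j.
Proof. exact: inordK. Qed.

Lemma wY0 k l : wY k l ord0 = (1%:Z, 0%:Z). Proof. by []. Qed.
Lemma wY1 k l : wY k l (inord 1) = (0%:Z, 1%:Z). Proof. by rewrite /wY val_inord5. Qed.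
Lemma wY2 k l : wY k l (inord 2) = (0%:Z, 1%:Z). Proof. by rewrite /wY val_inord5. Qed.
Lemma wY3 k l : wY k l (inord 3) = (1%:Z, l%:Z - k%:Z). Proof. by rewrite /wY val_inord5. Qed.
Lemma wY4 k l : wY k l (inord 4) = (0%:Z, k%:Z). Proof. by rewrite /wY val_inord5. Qed.

Lemma sec_cases (K : fieldType) k l (f : {mpoly K[5]}) m :
  is_section (wY k l) (1%:Z, l%:Z) f -> m \in msupp f ->
  (m ord0 = 1 /\ m (inord 3) = 0 /\ m (inord 1) + m (inord 2) + k * m (inord 4) = l)%N \/
  (m ord0 = 0 /\ m (inord 3) = 1 /\ m (inord 1) + m (inord 2) + k * m (inord 4) = k)%N.
Proof.
move=> Hs /Hs; rewrite !sum5 wY0 wY1 wY2 wY3 wY4 /= => -[E1 E2].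
have H1 : (m ord0 + m (inord 3) = 1)%N by lia.
have [H3|H3] : m (inord 3) = 0%N \/ m (inord 3) = 1%N by lia.
  rewrite H3 in E2 H1; left; lia.
rewrite H3 in E2 H1; right; lia.
Qed.

Lemma v5_0 (T : Type) (a b c d e : T) : v5 a b c d e ord0 = a. Proof. by []. Qed.
Lemma v5_1 (T : Type) (a b c d e : T) : v5 a b c d e (inord 1) = b.
Proof. by rewrite /v5 val_inord5. Qed.
Lemma v5_2 (T : Type) (a b c d e : T) : v5 a b c d e (inord 2) = c.
Proof. by rewrite /v5 val_inord5. Qed.
Lemma v5_3 (T : Type) (a b c d e : T) : v5 a b c d e (inord 3) = d.
Proof. by rewrite /v5 val_inord5. Qed.
Lemma v5_4 (T : Type) (a b c d e : T) : v5 a b c d e (inord 4) = e.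
Proof. by rewrite /v5 val_inord5. Qed.
Definition v5E := (v5_0, v5_1, v5_2, v5_3, v5_4).

Lemma meval_lin (R : comRingType) (f : {mpoly R[5]}) u v w (A B : R) :
  (forall m, m \in msupp f -> \prod_(i < 5) u i ^+ m i =
     A * \prod_(i < 5) v i ^+ m i + B * \prod_(i < 5) w i ^+ m i) ->
  f.@[u] = A * f.@[v] + B * f.@[w].
Proof.
move=> H; rewrite !mevalE !mulr_sumr -big_split /=; apply: eq_big_seq => m Hm.
rewrite H //; ring.
Qed.

Definition Gf (K : fieldType) (f : {mpoly K[5]}) y x z := f.@[v5 1 y x 0 z].
Definition Hf (K : fieldType) (f : {mpoly K[5]}) y x z := f.@[v5 0 y x 1 z].

Lemma f_split (K : fieldType) k l (f : {mpoly K[5]}) a b c d e :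
  is_section (wY k l) (1%:Z, l%:Z) f ->
  f.@[v5 a b c d e] = a * Gf f b c e + d * Hf f b c e.
Proof.
move=> Hs; apply: meval_lin => m Hm; rewrite !prod5 !v5E.
case: (sec_cases Hs Hm) => -[-> [-> _]]; rewrite ?expr0 ?expr1 ?expr1n; ring.
Qed.

Lemma G_hom (K : fieldType) k l (f : {mpoly K[5]}) lam y x z :
  is_section (wY k l) (1%:Z, l%:Z) f ->
  Gf f (lam * y) (lam * x) (lam ^+ k * z) = lam ^+ l * Gf f y x z.
Proof.
move=> Hs; rewrite /Gf (@meval_lin _ f _ (v5 1 y x 0 z) (v5 1 y x 0 z) (lam ^+ l) 0);
  first by rewrite mul0r addr0.
move=> m Hm; rewrite !prod5 !v5E.
case: (sec_cases Hs Hm) => -[-> [-> E]].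
  rewrite -E ?expr0 ?expr1 ?expr1n ?exprMn -?exprM ?exprD; ring.
rewrite ?expr0 ?expr1 ?expr0n /=; ring.
Qed.

Lemma H_hom (K : fieldType) k l (f : {mpoly K[5]}) lam y x z :
  is_section (wY k l) (1%:Z, l%:Z) f ->
  Hf f (lam * y) (lam * x) (lam ^+ k * z) = lam ^+ k * Hf f y x z.
Proof.
move=> Hs; rewrite /Hf (@meval_lin _ f _ (v5 0 y x 1 z) (v5 0 y x 1 z) (lam ^+ k) 0);
  first by rewrite mul0r addr0.
move=> m Hm; rewrite !prod5 !v5E.
case: (sec_cases Hs Hm) => -[-> [-> E]].
  rewrite ?expr0 ?expr1 ?expr0n /=; ring.
rewrite -{2}E ?expr0 ?expr1 ?expr1n ?exprMn -?exprM ?exprD; ring.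
Qed.

Lemma H_lin (K : fieldType) k l (f : {mpoly K[5]}) y x z :
  (0 < k)%N -> is_section (wY k l) (1%:Z, l%:Z) f ->
  Hf f y x z = z * Hf f 0 0 1 + 1 * Hf f y x 0.
Proof.
move=> hk Hs; apply: meval_lin => m Hm; rewrite !prod5 !v5E.
case: (sec_cases Hs Hm) => -[-> [-> E]].
  rewrite ?expr0 ?expr1 ?expr0n /=; ring.
have [E4|E4] : (m (inord 4) = 0 \/ m (inord 4) = 1)%N by nia.
  have [E1|E1] : (0 < m (inord 1) \/ 0 < m (inord 2))%N by lia.
    rewrite E4 ?expr0 ?expr1 ?expr1n (expr0n _ (m (inord 1))) (gtn_eqF E1) /=; ring.
  rewrite E4 ?expr0 ?expr1 ?expr1n (expr0n _ (m (inord 2))) (gtn_eqF E1) /=; ring.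
have E1 : m (inord 1) = 0%N by lia.
have E2 : m (inord 2) = 0%N by lia.
rewrite E4 E1 E2 ?expr0 ?expr1 ?expr1n ?expr0n /=; ring.
Qed.

Lemma torus5 (K : fieldType) k l (t1 t2 : K) a b c d e :
  torus_act (wY k l) t1 t2 (v5 a b c d e) =
  v5 (t1 * a) (t2 * b) (t2 * c) (t1 * t2 ^ (l%:Z - k%:Z) * d) (t2 ^+ k * e).
Proof.
apply: functional_extensionality => -[[|[|[|[|[|i]]]]] Hi] //=;
  rewrite /torus_act /v5 /= ?expr1z ?expr0z; try ring; by rewrite mul1r.
Qed.

Lemma exprz_lk (K : fieldType) k l (t : K) : t != 0 ->
  t ^ (l%:Z - k%:Z) * t ^+ k = t ^+ l.
Proof.
move=> t0; have -> : t ^+ k = t ^ (k%:Z) by [].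
by rewrite -expfzDr // subrK.
Qed.

Lemma semistable_suff (K : fieldType) k l (x : 'I_5 -> K) :
  (0 < k)%N -> (l < k + 2)%N ->
  (x ord0 != 0) || (x (inord 3) != 0) ->
  (x (inord 1) != 0) || (x (inord 2) != 0) || (x (inord 4) != 0) ->
  semistable (wY k l) omegaY x.
Proof.
move=> hk hlk H03 H124.
have kR : (k%:R : rat) != 0 by rewrite pnatr_eq0 -lt0n.
have lkR : (l%:R : rat) <= k%:R + 1.
  by rewrite natr1 ler_nat; lia.
rewrite (v5_eta x) in H03 H124 *; rewrite ?v5E in H03 H124.
set x0 := x ord0 in H03 H124 *; set x1 := x (inord 1) in H03 H124 *;
set x2 := x (inord 2) in H03 H124 *; set x3 := x (inord 3) in H03 H124 *;
set x4 := x (inord 4) in H03 H124 *.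
have cast : ((l%:Z - k%:Z)%:~R : rat) = l%:R - k%:R by rewrite intrB.
pose d := (k%:R + 2 - l%:R : rat).
have d0 : 0 <= d by rewrite /d; lra.
have Hsum : forall c : 'I_5 -> rat,
  (\sum_i c i * ((wY k l i).1)%:~R = c ord0 + c (inord 3)) /\
  (\sum_i c i * ((wY k l i).2)%:~R = c (inord 1) + c (inord 2) + c (inord 3) * (l%:R - k%:R) + c (inord 4) * k%:R).
  move=> c; rewrite !sum5 wY0 wY1 wY2 wY3 wY4 /= cast; split; ring.
case/orP: H03 => H03.
  case/orP: H124 => [/orP[]|] H124.
  - exists (v5 1 2 0 0 0); split.
    + by move=> -[[|[|[|[|[|i]]]]] Hi].
    + by move=> -[[|[|[|[|[|i]]]]] Hi] //= E; rewrite /v5 /= in E; by move: H03 H124; rewrite E eqxx.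
    + by rewrite (proj1 (Hsum _)) !v5E /omegaY /=; ring.
    + by rewrite (proj2 (Hsum _)) !v5E /omegaY /=; ring.
  - exists (v5 1 0 2 0 0); split.
    + by move=> -[[|[|[|[|[|i]]]]] Hi].
    + by move=> -[[|[|[|[|[|i]]]]] Hi] //= E; rewrite /v5 /= in E; by move: H03 H124; rewrite E eqxx.
    + by rewrite (proj1 (Hsum _)) !v5E /omegaY /=; ring.
    + by rewrite (proj2 (Hsum _)) !v5E /omegaY /=; ring.
  - exists (v5 1 0 0 0 (2 / k%:R)); split.
    + by move=> -[[|[|[|[|[|i]]]]] Hi] //=; rewrite /v5 /= divr_ge0 // ler0n.
    + by move=> -[[|[|[|[|[|i]]]]] Hi] //= E; rewrite /v5 /= in E; by move: H03 H124; rewrite E eqxx.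
    + by rewrite (proj1 (Hsum _)) !v5E /omegaY /=; ring.
    + by rewrite (proj2 (Hsum _)) !v5E /omegaY /=; field.
case/orP: H124 => [/orP[]|] H124.
- exists (v5 0 d 0 1 0); split.
  + by move=> -[[|[|[|[|[|i]]]]] Hi].
  + by move=> -[[|[|[|[|[|i]]]]] Hi] //= E; rewrite /v5 /= in E; by move: H03 H124; rewrite E eqxx.
  + by rewrite (proj1 (Hsum _)) !v5E /omegaY /=; ring.
  + by rewrite (proj2 (Hsum _)) !v5E /d /omegaY /=; ring.
- exists (v5 0 0 d 1 0); split.
  + by move=> -[[|[|[|[|[|i]]]]] Hi].
  + by move=> -[[|[|[|[|[|i]]]]] Hi] //= E; rewrite /v5 /= in E; by move: H03 H124; rewrite E eqxx.
  + by rewrite (proj1 (Hsum _)) !v5E /omegaY /=; ring.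
  + by rewrite (proj2 (Hsum _)) !v5E /d /omegaY /=; ring.
- exists (v5 0 0 0 1 (d / k%:R)); split.
  + by move=> -[[|[|[|[|[|i]]]]] Hi] //=; rewrite /v5 /= divr_ge0 // ler0n.
  + by move=> -[[|[|[|[|[|i]]]]] Hi] //= E; rewrite /v5 /= in E; by move: H03 H124; rewrite E eqxx.
  + by rewrite (proj1 (Hsum _)) !v5E /omegaY /=; ring.
  + by rewrite (proj2 (Hsum _)) !v5E /d /omegaY /=; field.
Qed.

Lemma semistable_nec (K : fieldType) k l (x : 'I_5 -> K) :
  (l < k + 2)%N -> semistable (wY k l) omegaY x ->
  ((x ord0 != 0) || (x (inord 3) != 0)) /\
  ((x (inord 1) != 0) || (x (inord 2) != 0) || (x (inord 4) != 0)).
Proof.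
move=> hlk [c [c0 cz s1 s2]].
have cast : ((l%:Z - k%:Z)%:~R : rat) = l%:R - k%:R by rewrite intrB.
move: s1 s2; rewrite !sum5 wY0 wY1 wY2 wY3 wY4 /omegaY /= cast => s1 s2.
split.
  case: (eqVneq (x ord0) 0) => [E0|H]; last by apply/orP; left.
  case: (eqVneq (x (inord 3)) 0) => [E3|H']; last by apply/orP; right.
  by move: s1; rewrite (cz _ E0) (cz _ E3); rewrite !mul0r !mulr0 !addr0 => /eqP; rewrite eq_sym oner_eq0.
case: (eqVneq (x (inord 1)) 0) => [E1|H]; first last.
  by apply/orP; left; apply/orP; left.
case: (eqVneq (x (inord 2)) 0) => [E2|H]; first last.
  by apply/orP; left; apply/orP; right.
case: (eqVneq (x (inord 4)) 0) => [E4|H]; last by apply/orP; right.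
exfalso.
move: s2; rewrite (cz _ E1) (cz _ E2) (cz _ E4) !mul0r ?add0r ?addr0 => s2.
have h0 := c0 ord0; have h3 := c0 (inord 3).
have lk : (l%:R : rat) - k%:R <= 1.
  by rewrite lerBlDr addrC natr1 ler_nat; lia.
move: s1; rewrite ?mulr1 ?mulr0 ?addr0 ?add0r => s1.
nra.
Qed.

Definition aOf (S : comRingType) N (ms : 'I_N -> 'X_{1..5}) (c : 'I_N -> S) : S :=
  ev ms c (v5 0 0 0 1 1).
Definition h10Of (S : comRingType) N (ms : 'I_N -> 'X_{1..5}) (c : 'I_N -> S) : S :=
  ev ms c (v5 0 1 0 1 0).
Definition hPOf (S : comRingType) N (ms : 'I_N -> 'X_{1..5}) (c : 'I_N -> S) : {poly S} :=
  ev ms (fun j => (c j)%:P) (v5 0 'X 1 1 0).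
Definition BPOf (S : comRingType) k N (ms : 'I_N -> 'X_{1..5}) (c : 'I_N -> S) : {poly S} :=
  ev ms (fun j => (c j)%:P)
    (v5 1 ((aOf ms c)%:P * 'X) (aOf ms c)%:P 0 (- ((aOf ms c) ^+ k.-1)%:P * hPOf ms c)).
Definition cinfOf (S : comRingType) k N (ms : 'I_N -> 'X_{1..5}) (c : 'I_N -> S) : S :=
  ev ms c (v5 1 (aOf ms c) 0 0 (- (aOf ms c) ^+ k.-1 * h10Of ms c)).
Definition BtOf (S : comRingType) k l N (ms : 'I_N -> 'X_{1..5}) (c : 'I_N -> S) : {poly S} :=
  \poly_(i < l.+1) (BPOf k ms c)`_i.
Definition DOf (S : comRingType) k l N (ms : 'I_N -> 'X_{1..5}) (c : 'I_N -> S) : S :=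
  aOf ms c * cinfOf k ms c * (BtOf k l ms c)`_l *
  \det (mySyl l l.-1 (BtOf k l ms c) (BtOf k l ms c)^`()).


Lemma aOf_morph (S T : comRingType) (phi : {rmorphism S -> T}) N ms (c : 'I_N -> S) :
  phi (aOf ms c) = aOf ms (phi \o c).
Proof. by rewrite /aOf ev_morph v5_comp rmorph0 rmorph1. Qed.

Lemma h10Of_morph (S T : comRingType) (phi : {rmorphism S -> T}) N ms (c : 'I_N -> S) :
  phi (h10Of ms c) = h10Of ms (phi \o c).
Proof. by rewrite /h10Of ev_morph v5_comp rmorph0 rmorph1. Qed.

Lemma hPOf_morph (S T : comRingType) (phi : {rmorphism S -> T}) N ms (c : 'I_N -> S) :
  map_poly phi (hPOf ms c) = hPOf ms (phi \o c).
Proof. by rewrite /hPOf ev_morphP v5_comp rmorph0 rmorph1 map_polyX. Qed.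

Lemma BPOf_morph (S T : comRingType) (phi : {rmorphism S -> T}) k N ms (c : 'I_N -> S) :
  map_poly phi (BPOf k ms c) = BPOf k ms (phi \o c).
Proof.
rewrite /BPOf ev_morphP v5_comp rmorph0 rmorph1.
rewrite !(rmorphM (map_poly phi)) (rmorphN (map_poly phi)) /= (map_polyX phi) hPOf_morph !map_polyC.
congr ev; congr v5.
- by rewrite -aOf_morph.
- by rewrite -aOf_morph.
- by rewrite -aOf_morph; congr (- _ * _); congr polyC; exact: rmorphXn.
Qed.

Lemma cinfOf_morph (S T : comRingType) (phi : {rmorphism S -> T}) k N ms (c : 'I_N -> S) :
  phi (cinfOf k ms c) = cinfOf k ms (phi \o c).
Proof.
rewrite /cinfOf ev_morph v5_comp rmorph0 rmorph1 rmorphM rmorphN rmorphXn.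
by rewrite aOf_morph h10Of_morph.
Qed.

Lemma BtOf_morph (S T : comRingType) (phi : {rmorphism S -> T}) k l N ms (c : 'I_N -> S) :
  map_poly phi (BtOf k l ms c) = BtOf k l ms (phi \o c).
Proof.
apply/polyP => i; rewrite coef_map /BtOf !coef_poly.
case: (i < l.+1)%N; last exact: rmorph0.
have E := congr1 (fun p : {poly T} => p`_i) (BPOf_morph phi k ms c).
by rewrite /= coef_map in E; exact: E.
Qed.

Lemma DOf_morph (S T : comRingType) (phi : {rmorphism S -> T}) k l N ms (c : 'I_N -> S) :
  phi (DOf k l ms c) = DOf k l ms (phi \o c).
Proof.
rewrite /DOf !rmorphM aOf_morph cinfOf_morph mySyl_morph -coef_map.
by rewrite -deriv_map !BtOf_morph.
Qed.

Definition Dsym (K : fieldType) k l N (ms : 'I_N -> 'X_{1..5}) : {mpoly K[N]} :=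
  DOf k l ms (fun j => 'X_j).

Lemma Dsym_eval (K : fieldType) k l N (ms : 'I_N -> 'X_{1..5}) (v : 'I_N -> K) :
  (Dsym K k l ms).@[v] = DOf k l ms v.
Proof.
rewrite /Dsym (DOf_morph (meval v)); congr DOf.
by apply: functional_extensionality => j /=; rewrite mevalXU.
Qed.

Lemma sum5n (G : 'I_5 -> nat) :
  (\sum_(i < 5) G i = G ord0 + G (inord 1) + G (inord 2) + G (inord 3) + G (inord 4))%N.
Proof.
rewrite !big_ord_recl big_ord0 addn0 !addnA.
congr (_ + _ + _ + _ + _)%N; congr G; exact: E5.
Qed.

Definition bnd (k l : nat) := (l + k).+2.
Definition NN (k l : nat) := #|{: 'X_{1..5 < bnd k l}}|.
Definition msk (k l : nat) : 'I_(NN k l) -> 'X_{1..5} :=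
  fun j => bmnm (enum_val j).
Definition coeffs (K : fieldType) k l (f : {mpoly K[5]}) : 'I_(NN k l) -> K :=
  fun j => f@_(msk j).
Arguments coeffs : clear implicits.
Arguments coeffs {K} k l f _.
Arguments msk : clear implicits.

Lemma sec_msize (K : fieldType) k l (f : {mpoly K[5]}) : (0 < k)%N ->
  is_section (wY k l) (1%:Z, l%:Z) f -> (msize f <= bnd k l)%N.
Proof.
move=> hk Hs; rewrite msizeE; apply/bigmax_leqP_seq => m Hm _.
rewrite mdegE sum5n /bnd.
case: (sec_cases Hs Hm) => -[-> [-> E]]; nia.
Qed.

Lemma ev_mmap (K : fieldType) (S : comRingType) (g : {rmorphism K -> S}) k l
  (f : {mpoly K[5]}) (h : 'I_5 -> S) : (0 < k)%N ->
  is_section (wY k l) (1%:Z, l%:Z) f ->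
  ev (msk k l) (g \o coeffs k l f) h = mmap g h f.
Proof.
move=> hk Hs; rewrite (mmapE (bnd k l)) ?sec_msize //.
rewrite /ev /NN.
have E := big_enum_val (A := {: 'X_{1..5 < bnd k l}}) (fun m => g f@_m * mmap1 h m).
transitivity (\sum_(m in {: 'X_{1..5 < bnd k l}}) g f@_m * mmap1 h m); last by apply: eq_bigl.
by rewrite E; apply: eq_bigr => j _ /=.
Qed.

Lemma ev_f (K : fieldType) k l (f : {mpoly K[5]}) x : (0 < k)%N ->
  is_section (wY k l) (1%:Z, l%:Z) f ->
  ev (msk k l) (coeffs k l f) x = f.@[x].
Proof. move=> hk Hs; exact: (ev_mmap idfun x hk Hs). Qed.

Lemma ev_horner (K : fieldType) N (ms : 'I_N -> 'X_{1..5}) (c : 'I_N -> K) h y :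
  (ev ms (fun j => (c j)%:P) h).[y] = ev ms c (fun i => (h i).[y]).
Proof.
rewrite /ev horner_sum; apply: eq_bigr => j _; rewrite hornerM hornerC horner_prod.
by congr (_ * _); apply: eq_bigr => i _; rewrite horner_exp.
Qed.


Lemma a_eq (K : fieldType) k l (f : {mpoly K[5]}) : (0 < k)%N ->
  is_section (wY k l) (1%:Z, l%:Z) f ->
  aOf (msk k l) (coeffs k l f) = Hf f 0 0 1.
Proof. by move=> hk Hs; rewrite /aOf ev_f. Qed.

Lemma cinf_eq (K : fieldType) k l (f : {mpoly K[5]}) : (0 < k)%N ->
  is_section (wY k l) (1%:Z, l%:Z) f ->
  cinfOf k (msk k l) (coeffs k l f) =
  Gf f (Hf f 0 0 1) 0 (- (Hf f 0 0 1) ^+ k.-1 * Hf f 1 0 0).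
Proof. by move=> hk Hs; rewrite /cinfOf /h10Of !ev_f // a_eq. Qed.

Lemma hP_horner (K : fieldType) k l (f : {mpoly K[5]}) y : (0 < k)%N ->
  is_section (wY k l) (1%:Z, l%:Z) f ->
  (hPOf (msk k l) (coeffs k l f)).[y] = Hf f y 1 0.
Proof.
move=> hk Hs; rewrite /hPOf ev_horner ev_f //; congr meval.
by apply: functional_extensionality => -[[|[|[|[|[|i]]]]] Hi];
  rewrite /v5 /= ?hornerC ?hornerX.
Qed.

Lemma BP_horner (K : fieldType) k l (f : {mpoly K[5]}) y : (0 < k)%N ->
  is_section (wY k l) (1%:Z, l%:Z) f ->
  (BPOf k (msk k l) (coeffs k l f)).[y] =
  Gf f (Hf f 0 0 1 * y) (Hf f 0 0 1) (- (Hf f 0 0 1) ^+ k.-1 * Hf f y 1 0).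
Proof.
move=> hk Hs; rewrite /BPOf ev_horner ev_f // a_eq //; congr meval.
apply: functional_extensionality => -[[|[|[|[|[|i]]]]] Hi];
  rewrite /v5 /= ?hornerC ?hornerX ?hornerE //.
by rewrite hP_horner.
Qed.

Lemma dle_mul (K : fieldType) (p q : {poly K}) a b :
  (size p <= a.+1)%N -> (size q <= b.+1)%N -> (size (p * q)%R <= (a + b).+1)%N.
Proof. move=> Hp Hq; have := size_polyMleq p q; lia. Qed.

Lemma dle_exp (K : fieldType) (p : {poly K}) a n :
  (size p <= a.+1)%N -> (size (p ^+ n) <= (a * n).+1)%N.
Proof.
move=> Hp; have H1 := size_poly_exp_leq p n.
have H2 : ((size p).-1 * n <= a * n)%N by rewrite leq_mul2r; apply/orP; right; lia.
lia.
Qed.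

Lemma dleC (K : fieldType) (c : K) : (size c%:P <= 0.+1)%N.
Proof. exact: size_polyC_leq1. Qed.

Lemma dleX (K : fieldType) : (size ('X : {poly K}) <= 1.+1)%N.
Proof. by rewrite size_polyX. Qed.

Lemma size_mmap_le (K : fieldType) (f : {mpoly K[5]}) (h : 'I_5 -> {poly K}) d :
  (forall m, m \in msupp f -> (size (mmap1 h m) <= d)%N) ->
  (size (mmap polyC h f) <= d)%N.
Proof.
move=> H; apply: (leq_trans (size_sum _ _ _)).
apply/bigmax_leqP_seq => m Hm _; rewrite mul_polyC.
exact: (leq_trans (size_scale_leq _ _) (H m Hm)).
Qed.

Lemma size_hP (K : fieldType) k l (f : {mpoly K[5]}) : (0 < k)%N ->
  is_section (wY k l) (1%:Z, l%:Z) f ->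
  (size (hPOf (msk k l) (coeffs k l f)) <= k.+1)%N.
Proof.
move=> hk Hs; rewrite /hPOf (ev_mmap polyC) //.
apply: size_mmap_le => m Hm; rewrite /mmap1 (prod5 (fun i => _ ^+ m i)) !v5E.
case: (sec_cases Hs Hm) => -[-> [-> E]].
  by rewrite expr1 ?mulr0 !mul0r size_poly0.
rewrite expr0 !expr1n !mul1r mulr1.
case: (m (inord 4)) E => [|n] E.
  by rewrite expr0 !mulr1 size_polyXn ltnS; lia.
by rewrite expr0n /= mulr0 size_poly0.
Qed.

Lemma size_BP (K : fieldType) k l (f : {mpoly K[5]}) : (0 < k)%N ->
  is_section (wY k l) (1%:Z, l%:Z) f ->
  (size (BPOf k (msk k l) (coeffs k l f)) <= l.+1)%N.
Proof.
move=> hk Hs; rewrite /BPOf (ev_mmap polyC) //.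
apply: size_mmap_le => m Hm; rewrite /mmap1 (prod5 (fun i => _ ^+ m i)) !v5E.
case: (sec_cases Hs Hm) => -[-> [-> E]]; last first.
  by rewrite expr1 ?mulr0 ?mul0r size_poly0.
rewrite expr0 !expr1n !mul1r mulr1.
set A := (aOf _ _)%:P; set C := - _%:P.
have HA : (size A <= 0.+1)%N by exact: dleC.
have HC : (size C <= 0.+1)%N by rewrite /C -polyCN; exact: dleC.
have HAX := dle_mul HA (@dleX K).
have HCh := dle_mul HC (size_hP hk Hs).
have := dle_mul (dle_mul (dle_exp (m (inord 1)) HAX) (dle_exp (m (inord 2)) HA))
                (dle_exp (m (inord 4)) HCh).
move/leq_trans; apply; rewrite ltnS; lia.
Qed.

Lemma poly_trunc (R : nzRingType) (p : {poly R}) n :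
  (size p <= n)%N -> \poly_(i < n) p`_i = p.
Proof.
move=> Hs; apply/polyP => i; rewrite coef_poly; case: ltnP => // H.
by rewrite nth_default // (leq_trans Hs H).
Qed.

Lemma roots_of (K : closedFieldType) (hK : [pchar K] =i pred0) l (B : {poly K}) :
  (0 < l)%N -> (size B <= l.+1)%N -> B`_l != 0 ->
  \det (mySyl l l.-1 B B^`()) != 0 ->
  exists rs : seq K, [/\ uniq rs, size rs = l & forall y, root B y = (y \in rs)].
Proof.
move=> hl HsB Bl Hdet.
have sB : size B = l.+1.
  apply/eqP; rewrite eqn_leq HsB /= ltnNge; apply: contra Bl => H.
  by rewrite nth_default.
have B0 : B != 0 by rewrite -size_poly_eq0 sB.
have sB' : size B^`() = l.
  apply/eqP; rewrite eqn_leq; apply/andP; split.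
    by have := lt_size_deriv B0; rewrite sB.
  have E : B^`()`_l.-1 = B`_l *+ l by rewrite coef_deriv prednK.
  have Hn : B^`()`_l.-1 != 0.
    rewrite E -mulr_natr mulf_neq0 //.
    by move/pcharf0P: hK => ->; rewrite -lt0n.
  have : (l.-1 < size B^`())%N.
    by rewrite ltnNge; apply: contra Hn => H; rewrite nth_default.
  by rewrite prednK.
have Hres : resultant B B^`() != 0 by rewrite resultant_mySyl sB sB'.
have cop : coprimep B B^`().
  move: Hres; rewrite resultant_eq0 -leqNgt /coprimep => H.
  rewrite eqn_leq H /= lt0n size_poly_eq0 gcdp_eq0 negb_and B0 //.
have [rs Ers] := closed_field_poly_normal B.
have lc0 : lead_coef B != 0 by rewrite lead_coef_eq0.
exists rs; split.
- rewrite -separable_prod_XsubC -(eqp_separable (eqp_scale _ lc0)) -Ers.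
  by rewrite unlock.
- by move: sB; rewrite Ers size_scale // size_prod_XsubC => -[].
- by move=> y; rewrite Ers rootZ // root_prod_XsubC.
Qed.

Lemma val_inord3 j : (j < 3)%N -> val (inord j : 'I_3) = j.
Proof. exact: inordK. Qed.

Lemma v3_0 (T : Type) (a b c : T) : v3 a b c ord0 = a. Proof. by []. Qed.
Lemma v3_1 (T : Type) (a b c : T) : v3 a b c (inord 1) = b.
Proof. by rewrite /v3 val_inord3. Qed.
Lemma v3_2 (T : Type) (a b c : T) : v3 a b c (inord 2) = c.
Proof. by rewrite /v3 val_inord3. Qed.
Definition v3E := (v3_0, v3_1, v3_2).

Lemma wP0 k : wP k ord0 = 1%N. Proof. by []. Qed.
Lemma wP1 k : wP k (inord 1) = 1%N. Proof. by rewrite /wP val_inord3. Qed.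
Lemma wP2 k : wP k (inord 2) = k. Proof. by rewrite /wP val_inord3. Qed.

Lemma piY_v5 (K : fieldType) (a b c d e : K) : piY (v5 a b c d e) = v3 b c e.
Proof.
apply: functional_extensionality => -[[|[|[|i]]] Hi] //=; rewrite /piY /v3 /= ?v5E //.
Qed.

Lemma wp_point3 (K : fieldType) (p : 'I_3 -> K) :
  wp_point p <-> (p ord0 != 0) || (p (inord 1) != 0) || (p (inord 2) != 0).
Proof.
split.
  move=> [i Hi]; move: Hi; rewrite {1}(v3_eta p) /v3.
  case: i => -[|[|[|i]]] Hi //= H; rewrite ?H ?orbT //.
move=> /orP[/orP[]|] H; [exists ord0 | exists (inord 1) | exists (inord 2)]; done.
Qed.

Lemma wp_same3 (K : fieldType) k (p q : 'I_3 -> K) :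
  wp_same (wP k) p q <->
  exists lam, lam != 0 /\ [/\ q ord0 = lam * p ord0, q (inord 1) = lam * p (inord 1)
                          & q (inord 2) = lam ^+ k * p (inord 2)].
Proof.
split.
  move=> [lam [Hl ->]]; exists lam; split => //.
  by rewrite wP0 wP1 wP2 !expr1.
move=> [lam [Hl [E0 E1 E2]]]; exists lam; split => //.
rewrite (v3_eta q) E0 E1 E2.
apply: functional_extensionality => -[[|[|[|i]]] Hi]; rewrite /v3 /wP /= ?expr1.
all: congr (_ * p _); apply: val_inj; rewrite /= ?val_inord3 //.
Qed.

Lemma same_orbit5 (K : fieldType) k l (x y : 'I_5 -> K) :
  same_orbit (wY k l) x y <->
  exists t1 t2 : K, [/\ t1 != 0, t2 != 0 &
    y = v5 (t1 * x ord0) (t2 * x (inord 1)) (t2 * x (inord 2))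
           (t1 * t2 ^ (l%:Z - k%:Z) * x (inord 3)) (t2 ^+ k * x (inord 4))].
Proof.
have E := torus5 k l _ _ (x ord0) (x (inord 1)) (x (inord 2)) (x (inord 3)) (x (inord 4)).
rewrite -(v5_eta x) in E.
split.
  by move=> [t1 [t2 [H1 H2 Ey]]]; exists t1, t2; split => //; rewrite Ey E.
by move=> [t1 [t2 [H1 H2 Ey]]]; exists t1, t2; split => //; rewrite Ey E.
Qed.

Definition v2 {T : Type} (a b : T) : 'I_2 -> T := fun i => if val i == 0%N then a else b.

Lemma wp_point2 (K : fieldType) (st : 'I_2 -> K) :
  wp_point st <-> (st ord0 != 0) || (st ord_max != 0).
Proof.
split.
  move=> [i H]; apply/orP; case: i H => -[|[|i]] Hi H //.
    by left; have -> : ord0 = Ordinal Hi by apply: val_inj.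
  by right; have -> : ord_max = Ordinal Hi by apply: val_inj.
move=> /orP[] H; [exists ord0 | exists ord_max]; done.
Qed.

Lemma kernel2 (K : fieldType) (al be u0 u1 w0 w1 : K) :
  (al != 0) || (be != 0) -> (u0 != 0) || (u1 != 0) -> (w0 != 0) || (w1 != 0) ->
  al * u0 + be * u1 = 0 -> al * w0 + be * w1 = 0 ->
  exists t, t != 0 /\ w0 = t * u0 /\ w1 = t * u1.
Proof.
move=> Hab Hu Hw Eu Ew.
have [b0|bn0] := eqVneq be 0.
  move: Hab; rewrite b0 eqxx orbF => a0.
  have u00 : u0 = 0 by move: Eu; rewrite b0 mul0r addr0 => /eqP; rewrite mulf_eq0 (negbTE a0) => /eqP.
  have w00 : w0 = 0 by move: Ew; rewrite b0 mul0r addr0 => /eqP; rewrite mulf_eq0 (negbTE a0) => /eqP.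
  move: Hu Hw; rewrite u00 w00 eqxx /= => Hu Hw.
  exists (w1 / u1); split; first by rewrite mulf_neq0 // invr_eq0.
  by split; [rewrite mulr0 | field].
have Eu' : u1 * be = - al * u0 by rewrite -[RHS]addr0 -Eu; ring.
have Ew' : w1 * be = - al * w0 by rewrite -[RHS]addr0 -Ew; ring.
have Eu1 : u1 = - al * u0 / be by rewrite -Eu' mulfK.
have Ew1 : w1 = - al * w0 / be by rewrite -Ew' mulfK.
have u0n : u0 != 0.
  apply: contraTneq Hu => u00; by rewrite Eu1 u00 mulr0 mul0r eqxx.
have w0n : w0 != 0.
  apply: contraTneq Hw => w00; by rewrite Ew1 w00 mulr0 mul0r eqxx.
exists (w0 / u0); split; first by rewrite mulf_neq0 // invr_eq0.
split; first by field.
rewrite Eu1 Ew1; field; by apply/andP.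
Qed.

Definition phiC (K : fieldType) (r z : K) : 'I_5 -> {mpoly K[2]} :=
  v5 'X_ord0 r%:MP 1 'X_ord_max z%:MP.

Lemma phi_eval (K : fieldType) (r z : K) (st : 'I_2 -> K) :
  (fun i => (phiC r z i).@[st]) = v5 (st ord0) r 1 (st ord_max) z.
Proof.
apply: functional_extensionality => -[[|[|[|[|[|i]]]]] Hi];
  rewrite /phiC /v5 /= ?mevalXU ?mevalC ?meval1 //.
Qed.

Lemma phi_P1 (K : fieldType) k l (r z : K) : (0 < k)%N -> (l < k + 2)%N ->
  P1_morphism (wY k l) omegaY (phiC r z).
Proof.
move=> hk hlk; exists 1, 0, (v5 1 0 0 1 0)%N; split.
- move=> -[[|[|[|[|[|i]]]]] Hi] m; rewrite /phiC /v5 /= ?msuppX ?msuppC ?msupp1 ?inE;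
    try (by move/eqP => ->; rewrite mdeg1);
    try (by case: ifP => _; rewrite ?inE // => /eqP ->; rewrite mdeg0);
    by move/eqP => ->; rewrite mdeg0.
- by move=> -[[|[|[|[|[|i]]]]] Hi]; rewrite /wY /v5 /= ?mul1r ?mul0r ?addr0.
- move=> st /wp_point2 Hst; rewrite phi_eval; apply: semistable_suff => //;
    rewrite !v5E //; by rewrite oner_neq0 ?orbT.
Qed.

Lemma phi_nonconst (K : fieldType) k l (r z : K) :
  exists st st' : 'I_2 -> K,
    [/\ wp_point st, wp_point st' &
        ~ same_orbit (wY k l) (fun i => (phiC r z i).@[st])
                              (fun i => (phiC r z i).@[st'])].
Proof.
exists (v2 1 0), (v2 0 1); split.
- by apply/wp_point2; rewrite /v2 /= oner_neq0.
- by apply/wp_point2; rewrite /v2 /= oner_neq0 orbT.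
rewrite !phi_eval => /same_orbit5 [t1 [t2 [H1 H2 E]]].
have := congr1 (fun g => g ord0) E; rewrite !v5E /v2 /= mulr1 => E0.
by move: H1; rewrite -E0 eqxx.
Qed.

Lemma piY_eta (K : fieldType) (x : 'I_5 -> K) :
  piY x = v3 (x (inord 1)) (x (inord 2)) (x (inord 4)).
Proof. by rewrite {1}(v5_eta x) piY_v5. Qed.

Lemma main_f (K : closedFieldType) (hK : [pchar K] =i pred0) k l
  (hk : (0 < k)%N) (hl : (0 < l)%N) (hlk : (l < k + 2)%N) (f : {mpoly K[5]}) :
  is_section (wY k l) (1%:Z, l%:Z) f ->
  DOf k l (msk k l) (coeffs k l f) != 0 -> contraction_property k l f.
Proof.
move=> Hs HD.
move: HD; rewrite /DOf !mulf_eq0 !negb_or => /andP[/andP[/andP[Ha Hc] Hl] Hd].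
rewrite a_eq // in Ha; rewrite cinf_eq // in Hc.
have BtE : BtOf k l (msk k l) (coeffs k l f) = BPOf k (msk k l) (coeffs k l f).
  by rewrite /BtOf poly_trunc // size_BP.
rewrite BtE in Hl Hd.
have [rs [Urs Srs Rrs]] := roots_of hK hl (size_BP hk Hs) Hl Hd.
set a := Hf f 0 0 1 in Ha Hc.
pose z y := - Hf f y 1 0 / a.
have ak : a ^+ k = a * a ^+ k.-1 by rewrite -exprS prednK.
have Gz : forall y, Gf f (a * y) a (- a ^+ k.-1 * Hf f y 1 0) = a ^+ l * Gf f y 1 (z y).
  move=> y; rewrite -(@G_hom K k l f a y 1 (z y) Hs); congr Gf; first by rewrite mulr1.
  by rewrite /z ak; field.
have Hz : forall y, Hf f y 1 (z y) = 0.
  by move=> y; rewrite (H_lin y 1 (z y) hk Hs) -/a /z; field.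
have rootE : forall y, (y \in rs) = (Gf f y 1 (z y) == 0).
  move=> y; rewrite -Rrs /root BP_horner // -/a Gz mulf_eq0 expf_eq0 (negbTE Ha) andbF //.
pose r (j : 'I_l) := nth 0 rs j.
have r_in : forall j : 'I_l, r j \in rs by move=> j; rewrite mem_nth // Srs.
pose q (j : 'I_l) := v3 (r j) 1 (z (r j)).
have Gq : forall j, Gf f (r j) 1 (z (r j)) = 0 by move=> j; apply/eqP; rewrite -rootE.
have CZ : forall p0 p1 p2 : K, (p0 != 0) || (p1 != 0) || (p2 != 0) ->
    Gf f p0 p1 p2 = 0 -> Hf f p0 p1 p2 = 0 ->
    exists j, wp_same (wP k) (v3 p0 p1 p2) (q j).
  move=> p0 p1 p2 Hp HG HH.
  have HL := H_lin p0 p1 p2 hk Hs; rewrite -/a HH mul1r in HL.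
  have [p10|p1n] := eqVneq p1 0.
    exfalso.
    have Hh0 : Hf f p0 0 0 = p0 ^+ k * Hf f 1 0 0.
      by rewrite -(@H_hom K k l f p0 1 0 0 Hs) mulr1 !mulr0.
    rewrite p10 Hh0 in HL.
    have [p00|p0n] := eqVneq p0 0.
      move: HL; rewrite p00 expr0n gtn_eqF // mul0r addr0 => /esym/eqP.
      rewrite mulf_eq0 (negbTE Ha) orbF => /eqP p20.
      by move: Hp; rewrite p00 p10 p20 eqxx.
    pose nu := a / p0.
    have := @G_hom K k l f nu p0 p1 p2 Hs; rewrite HG mulr0 p10 mulr0.
    have -> : nu * p0 = a by rewrite /nu mulfVK.
    have -> : nu ^+ k * p2 = - a ^+ k.-1 * Hf f 1 0 0.
      have p2E : p2 = - (p0 ^+ k * Hf f 1 0 0) / a.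
        by apply: (mulIf Ha); rewrite mulfVK //; apply/eqP; rewrite -addr_eq0 -HL.
      rewrite /nu p2E expr_div_n ak; field.
      by rewrite expf_neq0 //; apply/andP.
    by move=> E; move: Hc; rewrite E eqxx.
  pose nu := p1^-1; pose y := p0 / p1.
  have G1 := @G_hom K k l f nu p0 p1 p2 Hs; rewrite HG mulr0 in G1.
  have H1 := @H_hom K k l f nu p0 p1 p2 Hs; rewrite HH mulr0 in H1.
  have e1 : nu * p1 = 1 by rewrite /nu mulVf.
  have e0 : nu * p0 = y by rewrite /nu /y mulrC.
  rewrite e1 e0 in G1 H1.
  have e2 : nu ^+ k * p2 = z y.
    move: H1; rewrite (H_lin y 1 (nu ^+ k * p2) hk Hs) -/a mul1r => H1.
    by rewrite /z; apply: (mulIf Ha); rewrite mulfVK //; apply/eqP; rewrite -addr_eq0 H1.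
  rewrite e2 in G1.
  have yin : y \in rs by rewrite rootE G1 eqxx.
  have iy : (index y rs < l)%N by rewrite -Srs index_mem.
  exists (Ordinal iy); apply/wp_same3; exists nu; split.
    by rewrite /nu invr_eq0.
  rewrite /q /r /= !v3E nth_index //; split => //.
split.
  move=> q0 /wp_point3 Hq.
  set x0 := q0 ord0 in Hq *; set x1 := q0 (inord 1) in Hq *; set x2 := q0 (inord 2) in Hq *.
  set g := Gf f x0 x1 x2; set h := Hf f x0 x1 x2.
  have Hpi : forall u v : K, wp_same (wP k) (piY (v5 u x0 x1 v x2)) q0.
    move=> u v; exists 1; split; first exact: oner_neq0.
    rewrite piY_v5 {1}(v3_eta q0); apply: functional_extensionality => i.
    by rewrite expr1n mul1r.
  have [gh0|ghn] := boolP ((g == 0) && (h == 0)).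
    exists (v5 1 x0 x1 0 x2); split; last exact: Hpi.
    split.
      by apply: semistable_suff; rewrite ?v5E ?oner_neq0.
    rewrite (f_split _ _ _ _ _ Hs) -/g -/h.
    by move/andP: gh0 => [/eqP-> /eqP->]; rewrite !mulr0 addr0.
  exists (v5 h x0 x1 (- g) x2); split; last exact: Hpi.
  split.
    apply: semistable_suff; rewrite ?v5E // oppr_eq0.
    by move: ghn; rewrite negb_and orbC.
  by rewrite (f_split _ _ _ _ _ Hs) -/g -/h; ring.
exists q, (fun j => phiC (r j) (z (r j))); split.
- by move=> j; apply/wp_point3; rewrite /q !v3E oner_neq0 ?orbT.
- move=> j j' /wp_same3 [lam [Hlam [E0 E1 E2]]].
  rewrite /q !v3E mulr1 in E0 E1 E2.
  rewrite -E1 mul1r in E0.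
  apply: val_inj; apply/eqP; rewrite -(nth_uniq 0 _ _ Urs) ?Srs ?ltn_ord //.
  by rewrite /r in E0; rewrite E0.
- by move=> j; split; [exact: phi_P1 | exact: phi_nonconst].
- move=> j x Hx; split.
    move=> [[_ Hf0] Hw].
    move: Hw; rewrite piY_eta => /wp_same3 [lam [Hl0 [E0 E1 E2]]].
    rewrite /q !v3E in E0 E1 E2.
    have [Hx03 _] := semistable_nec hlk Hx.
    set t2 := x (inord 2) in E1.
    have t2n : t2 != 0 by apply/eqP => t0; move: E1; rewrite t0 mulr0 => /eqP; rewrite oner_eq0.
    set e := t2 ^ (l%:Z - k%:Z).
    have en : e != 0 by rewrite expfz_neq0.
    exists (v2 (x ord0) (x (inord 3) / e)); split.
      apply/wp_point2; rewrite /v2 /= mulf_eq0 invr_eq0 (negbTE en) orbF //.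
    rewrite phi_eval; apply/same_orbit5; exists 1, t2; rewrite !v5E; split => //; first exact: oner_neq0.
    rewrite {1}(v5_eta x) /v2 /= -/t2 -/e; congr v5.
    - by rewrite mul1r.
    - by rewrite E0 mulrA (mulrC t2) -E1 mul1r.
    - by rewrite mulr1.
    - by rewrite mul1r mulrC mulfVK.
    - by rewrite E2 mulrA -exprMn (mulrC t2) -E1 expr1n mul1r.
  move=> [st [Hst]]; rewrite phi_eval => /same_orbit5 [t1 [t2 [Ht1 Ht2 Ex]]].
  rewrite !v5E in Ex; subst x.
  split; first split => //.
    rewrite (f_split _ _ _ _ _ Hs).
    by rewrite (@G_hom K k l f _ _ _ _ Hs) (@H_hom K k l f _ _ _ _ Hs) Gq Hz !mulr0 addr0.
  rewrite piY_v5; apply/wp_same3; exists t2^-1; split; first by rewrite invr_eq0.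
  rewrite /q !v3E exprVn; split; field; by rewrite ?expf_neq0.
move=> p Hp Hnot x x' [Hx Hfx] [Hx' Hfx'] Hw Hw'.
move: Hw; rewrite piY_eta => /wp_same3 [lam [Hl0 [E0 E1 E2]]].
move: Hw'; rewrite piY_eta => /wp_same3 [lam' [Hl0' [E0' E1' E2']]].
rewrite !v3E in E0 E1 E2 E0' E1' E2'.
have [Hx03 Hx124] := semistable_nec hlk Hx.
have [Hx03' _] := semistable_nec hlk Hx'.
set x1 := x (inord 1) in E0 E1 E2 Hx124 *; set x2 := x (inord 2) in E0 E1 E2 Hx124 *;
set x4 := x (inord 4) in E0 E1 E2 Hx124 *.
pose mu := lam / lam'.
have mun : mu != 0 by rewrite /mu mulf_neq0 // invr_eq0.
have y1E : x' (inord 1) = mu * x1.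
  by apply: (mulfI Hl0'); rewrite -E0' E0 /mu; field.
have y2E : x' (inord 2) = mu * x2.
  by apply: (mulfI Hl0'); rewrite -E1' E1 /mu; field.
have y4E : x' (inord 4) = mu ^+ k * x4.
  apply: (mulfI (expf_neq0 k Hl0')); rewrite -E2' E2 /mu expr_div_n; field.
  by rewrite expf_neq0.
set g := Gf f x1 x2 x4; set h := Hf f x1 x2 x4.
have gh : (g != 0) || (h != 0).
  case: (eqVneq g 0) => [g0|gn]; last by apply/orP; left.
  case: (eqVneq h 0) => [h0|hn]; last by apply/orP; right.
  exfalso.
  have [j Hj] := CZ x1 x2 x4 Hx124 g0 h0.
  apply: (Hnot j); move/wp_same3: Hj => [nu [Hnu [F0 F1 F2]]].
  rewrite !v3E in F0 F1 F2.
  apply/wp_same3; exists (nu / lam); split; first by rewrite mulf_neq0 // invr_eq0.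
  rewrite E0 E1 E2 F0 F1 F2 expr_div_n; split; field => //.
  by rewrite expf_neq0.
have fx : x ord0 * g + x (inord 3) * h = 0.
  by rewrite -Hfx {3}(v5_eta x) (f_split _ _ _ _ _ Hs).
have fx' : x' ord0 * (mu ^+ l * g) + x' (inord 3) * (mu ^+ k * h) = 0.
  rewrite -Hfx' {3}(v5_eta x') (f_split _ _ _ _ _ Hs) y1E y2E y4E.
  by rewrite (@G_hom K k l f _ _ _ _ Hs) (@H_hom K k l f _ _ _ _ Hs).
set e := mu ^ (l%:Z - k%:Z).
have en : e != 0 by rewrite expfz_neq0.
have mlk : mu ^+ l = e * mu ^+ k by rewrite -(exprz_lk k l mun).
have [t [tn [T0 T3]]] : exists t, t != 0 /\ x' ord0 = t * x ord0 /\ x' (inord 3) = t * (e * x (inord 3)).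
  apply: (@kernel2 K (mu ^+ l * g) (mu ^+ k * h)).
  - move: gh => /orP[] H; apply/orP; [left|right]; by rewrite mulf_neq0 // expf_neq0.
  - move: Hx03 => /orP[] H; apply/orP; [left|right]; by rewrite ?mulf_neq0.
  - exact: Hx03'.
  - by rewrite mlk -[RHS](mulr0 (e * mu ^+ k)) -fx; ring.
  - by move: fx'; rewrite [_ * (mu ^+ l * g)]mulrC [_ * (mu ^+ k * h)]mulrC.
apply/same_orbit5; exists t, mu; split => //.
rewrite {1}(v5_eta x') T0 T3 y1E y2E y4E; congr v5.
by rewrite mulrA.
Qed.

Definition mon (a b c d e : nat) : 'X_{1..5} := [multinom v5 a b c d e i | i < 5].

Lemma monE a b c d e i : mon a b c d e i = v5 a b c d e i.
Proof. by rewrite /mon mnmE. Qed.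

Definition f0 (K : fieldType) (l : nat) : {mpoly K[5]} :=
  'X_[mon 1 l 0 0 0] - 'X_[mon 1 0 l 0 0] + 'X_[mon 0 0 0 1 1].

Lemma mmap1_mon (S : comRingType) (h : 'I_5 -> S) a b c d e :
  mmap1 h (mon a b c d e) =
  h ord0 ^+ a * h (inord 1) ^+ b * h (inord 2) ^+ c * h (inord 3) ^+ d * h (inord 4) ^+ e.
Proof. by rewrite /mmap1 (prod5 (fun i => h i ^+ _)) !monE !v5E. Qed.

Lemma f0_mmap (K : fieldType) (S : comRingType) (g : {rmorphism K -> S}) l (h : 'I_5 -> S) :
  mmap g h (f0 K l) = h ord0 * h (inord 1) ^+ l - h ord0 * h (inord 2) ^+ l + h (inord 3) * h (inord 4).
Proof.
rewrite /f0 mmapD mmapB !mmapX !mmap1_mon; ring.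
Qed.

Lemma f0_eval (K : fieldType) l (x : 'I_5 -> K) :
  (f0 K l).@[x] = x ord0 * x (inord 1) ^+ l - x ord0 * x (inord 2) ^+ l + x (inord 3) * x (inord 4).
Proof. exact: (f0_mmap idfun). Qed.

Lemma f0_section (K : fieldType) k l : is_section (wY k l) (1%:Z, l%:Z) (f0 K l).
Proof.
move=> m Hm.
have : m \in [:: mon 1 l 0 0 0; mon 1 0 l 0 0; mon 0 0 0 1 1].
  have := msuppD_le Hm; rewrite mem_cat; case/orP => H1.
    have := msuppB_le H1; rewrite mem_cat !msuppX !inE; case/orP => ->; by rewrite ?orbT.
  by move: H1; rewrite msuppX !inE => ->; rewrite ?orbT.
rewrite !inE => /orP[|/orP[]] /eqP ->; rewrite !sum5 !monE !v5E wY0 wY1 wY2 wY3 wY4 /=;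
  congr pair; lia.
Qed.

Lemma f0_D (K : fieldType) (hK : [pchar K] =i pred0) k l :
  (0 < k)%N -> (0 < l)%N -> DOf k l (msk k l) (coeffs k l (f0 K l)) != 0.
Proof.
move=> hk hl.
have Hs := @f0_section K k l.
have Ha' : Hf (f0 K l) 0 0 1 = 1.
  by rewrite /Hf f0_eval !v5E expr0n gtn_eqF // !mulr0 subrr add0r mulr1.
have Ha : aOf (msk k l) (coeffs k l (f0 K l)) = 1 by rewrite a_eq.
have Hc : cinfOf k (msk k l) (coeffs k l (f0 K l)) = 1.
  rewrite cinf_eq // /Gf f0_eval !v5E expr0n gtn_eqF // Ha' expr1n /=.
  by rewrite ?mulr0 ?subr0 ?mul0r ?addr0 ?mulr1 ?mul1r expr1n.
have HB : BPOf k (msk k l) (coeffs k l (f0 K l)) = 'X^l - 1.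
  rewrite /BPOf (ev_mmap polyC) // f0_mmap !v5E Ha polyC1 mul0r addr0 !mul1r.
  by rewrite expr1n.
have BtE : BtOf k l (msk k l) (coeffs k l (f0 K l)) = 'X^l - 1.
  by rewrite /BtOf poly_trunc; [exact: HB | exact: size_BP].
rewrite /DOf Ha Hc BtE !mul1r coefB coefXn coef1 eqxx gtn_eqF // subr0.
rewrite /= mul1r.
have ln : (l%:R : K) != 0 by move/pcharf0P: hK => ->; rewrite -lt0n.
have dB : (('X^l - 1 : {poly K})^`()) = (l%:R : K) *: ('X^(l.-1) : {poly K}).
  by rewrite derivB derivXn -polyC1 derivC subr0 scaler_nat.
have sB : size ('X^l - 1 : {poly K}) = l.+1 by rewrite size_Xn_sub_1.
have sB' : size (('X^l - 1 : {poly K})^`()) = l.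
  by rewrite dB size_scale // size_polyXn prednK.
have := resultant_mySyl ('X^l - 1 : {poly K}) (('X^l - 1)^`()).
rewrite sB sB' /= => <-.
rewrite resultant_eq0 -leqNgt.
have cop : coprimep ('X^l - 1 : {poly K}) (('X^l - 1)^`()).
  apply/Bezout_coprimepP; exists (-1, ((l%:R)^-1)%:P * 'X) => /=.
  rewrite dB -mul_polyC.
  have -> : (((l%:R : K)^-1)%:P * 'X * ((l%:R : K)%:P * 'X^(l.-1)) : {poly K}) = 'X^l.
    have E : forall (A B C D : {poly K}), A * B * (C * D) = (A * C) * (B * D).
      by move=> A B C D; ring.
    by rewrite E -polyCM mulVf // polyC1 mul1r -exprS prednK.
  have -> : -1 * ('X^l - 1) + 'X^l = 1 :> {poly K} by ring.
  exact: eqpxx.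
by move: cop; rewrite /coprimep => /eqP ->.
Qed.

Unset Implicit Arguments.
Set Strict Implicit.

Theorem proposition4p2 (K : closedFieldType) (hK : [pchar K] =i pred0)
    (k l : nat) (hk : (0 < k)%N) (hl : (0 < l)%N) (hlk : (l < k + 2)%N) :
  @holds_generally K 5 (@is_section K 5 (wY k l) ((1 : int), (l%:Z)))
                  (@contraction_property K k l).
Proof.
exists (NN k l), (msk k l), (Dsym K k l (msk k l)); split.
  exists (f0 K l); split; first exact: f0_section.
  rewrite Dsym_eval; exact: f0_D.
move=> f Hs HD; apply: main_f => //.
by rewrite -Dsym_eval.
Qed.
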